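(* Let $\alpha,\beta$ be relatively prime positive integers and $n$ a positive integer with $s=s(n)>2$. If $(b,a)$ is $n$-good, then $a\le(\beta-1)g_s+\alpha b$.
   Context: The $(\alpha,\beta)$-walk $w_k(a_1,a_2)$ for positive integers $a_1,a_2$ is given by $w_1=a_1$, $w_2=a_2$, $w_{k+2}=\alpha w_{k+1}+\beta w_k$ ($k\ge1$). For a positive integer $n$, $s(n;a_1,a_2)$ is the (largest) index $s$ with $w_s(a_1,a_2)=n$ ($-\infty$ if none), and $s(n)=\max_{a_1,a_2\ge1}s(n;a_1,a_2)$. A pair $(a_1,a_2)$ with $a_1,a_2\ge1$ is $n$-good if $s(n;a_1,a_2)=s(n)$. The sequence $g_k$: $g_1=1$, $g_2=\alpha$, $g_{k+2}=\alpha g_{k+1}+\beta g_k$ for $k\ge1$. *)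

(* Defs.v *)
From mathcomp Require Import all_boot.
Set Implicit Arguments. Unset Strict Implicit. Unset Printing Implicit Defensive.

(* Pairs (w_{k+1}, w_{k+2}) of the (alpha,beta)-walk starting at (a1,a2). *)
Fixpoint walk_pair (alpha beta a1 a2 k : nat) : nat * nat :=
  match k with
  | 0 => (a1, a2)
  | k'.+1 => let (x, y) := walk_pair alpha beta a1 a2 k' in (y, alpha * y + beta * x)
  end.

(* walk alpha beta a1 a2 k = w_k(a1,a2) for k >= 1 (1-based: w_1 = a1, w_2 = a2,
   w_{k+2} = alpha w_{k+1} + beta w_k).  Index 0 is junk and never used. *)
Definition walk (alpha beta a1 a2 k : nat) : nat :=
  (walk_pair alpha beta a1 a2 k.-1).1.

Definition g (alpha beta k : nat) : nat := walk alpha beta 1 alpha k.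

Definition is_s_walk (alpha beta n a1 a2 s : nat) : Prop :=
  [/\ 1 <= s, walk alpha beta a1 a2 s = n &
      forall k, 1 <= k -> walk alpha beta a1 a2 k = n -> k <= s].

(* s = s(n) = max over a1, a2 >= 1 of s(n; a1, a2) (pairs with s(n;a1,a2) = -oo
   do not contribute to the max). *)
Definition is_s (alpha beta n s : nat) : Prop :=
  (exists a1 a2, [/\ 1 <= a1, 1 <= a2 & is_s_walk alpha beta n a1 a2 s]) /\
  (forall a1 a2 t, 1 <= a1 -> 1 <= a2 -> is_s_walk alpha beta n a1 a2 t -> t <= s).

Definition n_good (alpha beta n a1 a2 : nat) : Prop :=
  [/\ 1 <= a1, 1 <= a2 &
      exists s, is_s alpha beta n s /\ is_s_walk alpha beta n a1 a2 s].

(* Main.v *)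
Require Import Defs.
From mathcomp Require Import all_boot.
From mathcomp Require Import zify.
From Stdlib Require Import ArithRing.

Definition G (al be k : nat) := (walk_pair al be 0 1 k).1.

Lemma G_rec al be k : G al be k.+2 = al * G al be k.+1 + be * G al be k.
Proof.
rewrite /G /=.
case: (walk_pair al be 0 1 k) => x y /=. done.
Qed.

Lemma G_pair al be k : walk_pair al be 0 1 k = (G al be k, G al be k.+1).
Proof.
rewrite /G; elim: k => [|k IH] //=.
by rewrite IH /=; case: (walk_pair al be 0 1 k).
Qed.

Lemma wp_formula al be x y k :
  walk_pair al be x y k.+1 =
  (be * G al be k * x + G al be k.+1 * y, be * G al be k.+1 * x + G al be k.+2 * y).
Proof.
elim: k => [|k IH].
  by rewrite /G /=; f_equal; lia.
change (walk_pair al be x y k.+2) with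
  (let (u, v) := walk_pair al be x y k.+1 in (v, al * v + be * u)).
rewrite IH [G al be k.+3]G_rec /=.
f_equal; rewrite ?G_rec; lia.
Qed.

Lemma walk_formula al be x y m :
  walk al be x y m.+2 = be * G al be m * x + G al be m.+1 * y.
Proof. by rewrite /walk [m.+2.-1]/= wp_formula. Qed.

Lemma g_pair al be m : walk_pair al be 1 al m = (G al be m.+1, G al be m.+2).
Proof.
elim: m => [|m IH]; first by rewrite /G /= muln1 muln0 addn0.
change (walk_pair al be 1 al m.+1) with
  (let (u, v) := walk_pair al be 1 al m in (v, al * v + be * u)).
by rewrite IH -G_rec.
Qed.

Lemma g_G al be m : g al be m.+1 = G al be m.+1.
Proof. by rewrite /g /walk [m.+1.-1]/= g_pair. Qed.

Lemma coprime_G al be k : coprime al be -> coprime be (G al be k.+1).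
Proof.
move=> cab; elim: k => [|k IH]; first by rewrite /G /= /coprime gcdn1.
rewrite G_rec /coprime addnC mulnC gcdnMDl.
by rewrite -/(coprime _ _) coprimeMr coprime_sym cab IH.
Qed.

Lemma walk_pair_pos al be x y k : 0 < al -> 0 < be -> 0 < x -> 0 < y ->
  0 < (walk_pair al be x y k).1 /\ 0 < (walk_pair al be x y k).2 /\
  (0 < k -> (walk_pair al be x y k).1 < (walk_pair al be x y k).2).
Proof.
move=> ha hb hx hy; elim: k => [|k IH] /=; first by split.
case: (walk_pair al be x y k) IH => u v /= [hu [hv _]].
split=> //; split; first nia.
move=> _; nia.
Qed.

Lemma walk_ge al be x y k : 0 < al -> 0 < be -> 0 < x -> 0 < y ->
  k <= (walk_pair al be x y k).1 + 1.
Proof.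
move=> ha hb hx hy; elim: k => [|k IH] //=.
have := walk_pair_pos al be x y k ha hb hx hy.
case: (walk_pair al be x y k) IH => u v /= IH [hu [hv hlt]].
case: k IH hlt => [|k] IH hlt /=; first lia.
have := hlt isT; lia.
Qed.

Lemma max_exists al be n x y k : 0 < al -> 0 < be -> 0 < x -> 0 < y ->
  1 <= k -> walk al be x y k = n -> exists t, k <= t /\ is_s_walk al be n x y t.
Proof.
move=> ha hb hx hy hk hw.
pose P := fun i => (1 <= i) && (walk al be x y i == n).
have exP : exists i, P i by exists k; rewrite /P hk hw eqxx.
have ubP : forall i, P i -> i <= n.+2.
  move=> i /andP [h1 /eqP h2].
  have := walk_ge al be x y i.-1 ha hb hx hy. rewrite /walk in h2. rewrite h2. lia.
case: (ex_maxnP exP ubP) => t /andP [h1 /eqP h2] hmax.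
exists t; split; first by apply: hmax; rewrite /P hk hw eqxx.
split=> // i hi hwi; apply: hmax; by rewrite /P hi hwi eqxx.
Qed.

Theorem lemma2p6 (alpha beta n s b a : nat) :
  0 < alpha -> 0 < beta -> coprime alpha beta -> 0 < n ->
  is_s alpha beta n s -> 2 < s ->
  n_good alpha beta n b a ->
  a <= (beta - 1) * g alpha beta s + alpha * b.
Proof.
move=> ha hb cab hn [[x0 [y0 [hx0 hy0 hsw0]]] hmaxs] hs [hb1 ha1 [s' [hs' hsw]]].
have ess : s' = s.
  apply/eqP; rewrite eqn_leq; apply/andP; split.
    exact: (hmaxs b a s').
  by case: hs' => _ h; exact: (h x0 y0 s).
subst s'.
rewrite leqNgt; apply/negP => hlt.
clear hsw0 hs'; case: s hs hmaxs hsw hlt => [|[|m]] // hs hmaxs hsw hlt.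
case: hsw => _ hw _.
rewrite walk_formula in hw.
rewrite g_G G_rec in hlt.
set gg := G alpha beta m.+2.
have hgg : gg = alpha * G alpha beta m.+1 + beta * G alpha beta m by rewrite /gg G_rec.
rewrite -hgg in hlt.
have cg : coprime beta gg by rewrite /gg; apply: coprime_G.
case: (Bezoutl gg hb) => u0 _ hdv.
rewrite (eqP cg) in hdv.
case/dvdnP: hdv => q hq.
set D := a - alpha * b.
set u := (beta - 1) * u0.
set t := (u * D) %% beta.
have hug : (u * gg) %% beta = 1 %% beta.
  have e : u * gg + q * beta = 1 + (u0 * gg) * beta.
    rewrite /u; case: (beta) hb hq => // be' _ hq.
    rewrite subSS subn0 -mulnA -hq mulnS (mulnC be'); lia.
  by rewrite -(modnMDl q (u * gg) beta) addnC e addnC modnMDl.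
have htm : (t * gg) %% beta = D %% beta.
  by rewrite /t modnMml (mulnC u) -mulnA -modnMmr hug modnMmr muln1.
have tlt : t < beta by rewrite /t ltn_mod.
have hle : t * gg < D.
  have : t * gg <= (beta - 1) * gg by apply: leq_mul => //; lia.
  rewrite /D; lia.
have hdvd : beta %| D - t * gg.
  by rewrite -eqn_mod_dvd ?htm // ltnW.
set c := (D - t * gg) %/ beta.
clear hug htm.
have hc : c * beta = D - t * gg by rewrite /c divnK.
have cpos : 0 < c.
  rewrite lt0n; apply/negP => /eqP c0; move: hc; rewrite c0; lia.
set b' := b + t * G alpha beta m.+1.
have hw' : walk alpha beta c b' m.+3 = n.
  rewrite walk_formula -hw -/gg /b'.
  have eD : D + alpha * b = a.
    rewrite /D subnK //; exact: leq_trans (leq_addl _ _) (ltnW hlt).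
  rewrite -eD hgg.
  have hD : D = c * beta + t * gg by rewrite hc subnK // ltnW.
  rewrite hD hgg.
  move: (G alpha beta m.+1) (G alpha beta m) => X Y; clear; nia.
have [t' [ht' hsw']] := max_exists alpha beta n c b' m.+3 ha hb cpos (ltn_addr _ hb1) (isT : 1 <= m.+3) hw'.
have := hmaxs c b' t' cpos (ltn_addr _ hb1) hsw'.
lia.
Qed.
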